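(* Let $U, X, Y, Z$ be uncertain variables on a common set $\Omega$, with finite ranges, forming a Markov chain $U - X - Y - Z$. Then $\mathcal{L}(U\rightarrow Z)\leq \mathcal{L}(U\rightarrow Y)$.
   Context: Let $\Omega$ be a set. An uncertain variable (uv) is a map $X:\Omega\to\mathbb{X}$ into some set; all uvs considered have finite ranges. The range of $X$ is $[\![X]\!]:=\{X(\omega):\omega\in\Omega\}$; the joint range of $X,Y$ is $[\![X,Y]\!]:=\{(X(\omega),Y(\omega)):\omega\in\Omega\}$; the conditional range is $[\![X\mid Y(\omega)=y]\!]:=\{X(\omega):\omega\in\Omega,\ Y(\omega)=y\}$, and similarly $[\![X\mid Z(\omega)=z,Y(\omega)=y]\!]:=\{X(\omega):\omega\in\Omega,\ Z(\omega)=z,\ Y(\omega)=y\}$. Uvs $X$ and $Y$ are unrelated if $[\![X\mid Y(\omega)=y]\!]=[\![X]\!]$ for all $y\in[\![Y]\!]$ and $[\![Y\mid X(\omega)=x]\!]=[\![Y]\!]$ for all $x\in[\![X]\!]$. Uvs $X,Y,Z$ form a Markov chain $X-Y-Z$ if $[\![X\mid Z(\omega)=z,Y(\omega)=y]\!]=[\![X\mid Y(\omega)=y]\!]$ for all $(z,y)\in[\![Z,Y]\!]$; $X_1-X_2-\cdots-X_n$ is a Markov chain if $X_i-X_j-X_\ell$ is a Markov chain for all $1\le i<j<\ell\le n$. The non-stochastic brute-force guessing leakage from a uv $U$ to a uv $Y$ is $$\mathcal{L}(U\rightarrow Y):=\log_2\left(\frac{|[\![U]\!]|}{\min_{y\in[\![Y]\!]}|[\![U\mid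 Y(\omega)=y]\!]|}\right)=\max_{y\in[\![Y]\!]}\log_2\left(\frac{|[\![U]\!]|}{|[\![U\mid Y(\omega)=y]\!]|}\right).$$ *)

(* Defs.v *)
From mathcomp Require Import all_boot all_order all_algebra.
From mathcomp Require Import boolp classical_sets reals exp.
Set Implicit Arguments. Unset Strict Implicit. Unset Printing Implicit Defensive.
Import Order.TTheory GRing.Theory Num.Theory.
Local Open Scope ring_scope.

(* Uncertain variables: maps from an arbitrary set Omega into a finite type
   (so all ranges are finite). Ranges are finsets, membership decided
   classically via boolp's asbool. *)

Definition urange (Omega : Type) (T : finType) (X : Omega -> T) : {set T} :=
  [set x | `[< exists w, X w = x >]].

Definition ujrange (Omega : Type) (T S : finType) (X : Omega -> T) (Y : Omega -> S)
  : {set T * S} :=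
  [set p | `[< exists w, (X w, Y w) = p >]].

Definition ucrange (Omega : Type) (T S : finType) (X : Omega -> T) (Y : Omega -> S)
  (y : S) : {set T} :=
  [set x | `[< exists w, Y w = y /\ X w = x >]].

Definition ucrange2 (Omega : Type) (T S V : finType) (X : Omega -> T)
  (Z : Omega -> V) (Y : Omega -> S) (z : V) (y : S) : {set T} :=
  [set x | `[< exists w, Z w = z /\ Y w = y /\ X w = x >]].

Definition markov3 (Omega : Type) (T S V : finType) (X : Omega -> T)
  (Y : Omega -> S) (Z : Omega -> V) : Prop :=
  forall z y, (z, y) \in ujrange Z Y -> ucrange2 X Z Y z y = ucrange X Y y.

(* Markov chain X1 - X2 - X3 - X4: X_i - X_j - X_l for all i < j < l *)
Definition markov4 (Omega : Type) (T1 T2 T3 T4 : finType) (X1 : Omega -> T1)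
  (X2 : Omega -> T2) (X3 : Omega -> T3) (X4 : Omega -> T4) : Prop :=
  [/\ markov3 X1 X2 X3, markov3 X1 X2 X4, markov3 X1 X3 X4 & markov3 X2 X3 X4].

Definition log2 (R : realType) (x : R) : R := ln x / ln 2.

(* Non-stochastic brute-force guessing leakage, in its max form:
   max_{y in [[Y]]} log2 (|[[U]]| / |[[U | Y = y]]|)
   (the empty max, only possible when Omega is empty, is 0). *)
Definition leakage (R : realType) (Omega : Type) (T S : finType)
  (U : Omega -> T) (Y : Omega -> S) : R :=
  \big[Order.max/0]_(y in urange Y)
     log2 (#|urange U|%:R / #|ucrange U Y y|%:R).

(* Main.v *)
Require Import Defs.
From mathcomp Require Import all_boot all_order all_algebra.
From mathcomp Require Import boolp classical_sets reals exp.
Import Order.TTheory GRing.Theory Num.Theory.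
Local Open Scope ring_scope.

Theorem proposition1 (R : realType) (Omega : Type) (TU TX TY TZ : finType)
  (U : Omega -> TU) (X : Omega -> TX) (Y : Omega -> TY) (Z : Omega -> TZ) :
  markov4 U X Y Z ->
  leakage R U Z <= leakage R U Y.
Proof.
case=> _ _ HM _.
rewrite /leakage; apply: bigmax_le.
  exact: bigmax_ge_id.
move=> z; rewrite inE => /asboolP [w Zw].
have Yin : Y w \in urange Y by rewrite inE; apply/asboolP; exists w.
apply: le_trans (le_bigmax_cond _ _ Yin).
have sub : ucrange U Y (Y w) \subset ucrange U Z z.
  apply/fintype.subsetP => u; rewrite inE => /asboolP [w' [Yw' Uw']].
  have hz : (z, Y w) \in ujrange Z Y by rewrite inE; apply/asboolP; exists w; rewrite Zw.
  have := HM z (Y w) hz; move/setP => /(_ u).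
  rewrite inE [u \in ucrange _ _ _]inE.
  have -> : `[< exists w0, Y w0 = Y w /\ U w0 = u >] by apply/asboolP; exists w'.
  move=> /asboolP [w'' [Zw'' [_ Uw'']]].
  by rewrite inE; apply/asboolP; exists w''.
have c1 : (0 < #|ucrange U Y (Y w)|)%N.
  apply/card_gt0P; exists (U w); rewrite inE; apply/asboolP; exists w; done.
have cU : (0 < #|urange U|)%N.
  apply/card_gt0P; exists (U w); rewrite inE; apply/asboolP; exists w; done.
have cle := subset_leq_card sub.
have c2 : (0 < #|ucrange U Z z|)%N := leq_trans c1 cle.
rewrite /log2 ler_pM2r; last by rewrite invr_gt0 ln_gt0 // ltr1n.
rewrite ler_ln ?posrE ?divr_gt0 ?ltr0n //.
rewrite ler_pdivlMr ?ltr0n // mulrAC ler_pdivrMr ?ltr0n //.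
by rewrite ler_pM2l ?ltr0n // ler_nat.
Qed.
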